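(* For each integer $n\ge 3$ and each $Q\in\{Q_n(\mathscr{M}^{KI}_n),Q_n(\mathscr{M}^{KK}_n),Q_n(\mathscr{A}^{KK}_n),Q_n(\mathscr{H}^{KK}_n)\}$ we have $\alpha\text{-}\mathsf{tw}(Q)\le 2$ and $\alpha^{\ast}(Q)\le 3$.
   Context: Let $X^1,\dots,X^k$ be pairwise disjoint ordered sets $X^j=\{x^j_1,\dots,x^j_n\}$, and let $y^1,\dots,y^k,z^1,\dots,z^{k-1}$ be further distinct vertices. For ordered sets $X,Y$ of size $n$: the matching $\mathcal{M}(X,Y)$ has edges $x_iy_i$, the anti-matching $\mathcal{A}(X,Y)$ has edges $x_iy_j$ ($i\ne j$), the half-graph $\mathcal{H}(X,Y)$ has edges $x_iy_j$ ($i\le j$); $K(S)$ is the clique on $S$ and $K(S,T)$ the complete bipartite graph between $S$ and $T$; unions of graphs take the union of vertex and edge sets. Define $Q_k(\mathscr{M}^{KK}_n)=\bigcup_{i\in[k-1]}\mathcal{M}(X^i,X^{i+1})\cup\bigcup_{i\in[k]}K(\{y^i\}\cup X^i)$; $Q_k(\mathscr{M}^{KI}_n)=\bigcup_{i\in[k-1]}\mathcal{M}(X^i,X^{i+1})\cup\bigcup_{i\in[\lceil k/2\rceil]}K(\{y^{2i-1}\}\cup X^{2i-1})$; $Q_k(\mathscr{H}^{KK}_n)=\bigcup_{i\in[k-1]}\mathcal{H}(X^i,X^{i+1})\cup\bigcup_{i\in[k]}K(\{y^i\}\cup X^i)$; $Q_k(\mathscr{A}^{KK}_n)=\bigcup_{i\in[k-1]}\mathcal{A}(X^i,X^{i+1})\cup\bigcup_{i\in[k]}K(\{y^i\}\cup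 X^i)\cup\bigcup_{i\in[k-1]}K(\{z^i\},X^i\cup X^{i+1})$. $\alpha\text{-}\mathsf{tw}$ is the minimum over tree-decompositions of the maximum independence number of a bag, and $\alpha^{\ast}(G)=\max_v\alpha(G[N[v]])$. *)

(* Defs.v *)
From mathcomp Require Import all_boot.
From mathcomp Require Import boolp.

Set Implicit Arguments.
Unset Strict Implicit.
Unset Printing Implicit Defensive.

(* Generic graph parameters for a graph on a finite type V with edge   *)
(* relation E (assumed symmetric and irreflexive for our graphs).      *)
Section GraphParams.
Variables (V : finType) (E : rel V).

Definition independent (A : {set V}) : bool :=
  [forall x in A, forall y in A, ~~ E x y].

Definition alpha (S : {set V}) : nat :=
  \max_(A : {set V} | (A \subset S) && independent A) #|A|.

Definition closed_nbhd (v : V) : {set V} := v |: [set u | E v u].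

Definition alpha_star : nat := \max_(v : V) alpha (closed_nbhd v).

Definition is_tree (I : finType) (te : rel I) : Prop :=
  [/\ irreflexive te, symmetric te, 0 < #|I|,
      (forall s t, connect te s t) &
      #|[set p : I * I | te p.1 p.2]| = 2 * (#|I| - 1)].

Definition is_tree_decomposition (I : finType) (te : rel I)
    (B : I -> {set V}) : Prop :=
  [/\ is_tree te,
      (forall v, exists t, v \in B t),
      (forall u v, E u v -> exists t, (u \in B t) && (v \in B t)) &
      (forall v s t, v \in B s -> v \in B t ->
         connect [rel a b | [&& te a b, v \in B a & v \in B b]] s t)].

Definition alpha_width_at_most (k : nat) : Prop :=
  exists (I : finType) (te : rel I) (B : I -> {set V}),
    is_tree_decomposition te B /\ forall t, alpha (B t) <= k.

Lemma alpha_width_trivial : alpha_width_at_most #|V|.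
Proof.
exists unit, [rel _ _ | false], (fun _ => setT); split; last first.
  by move=> _; apply/bigmax_leqP => A _; apply: max_card.
split.
- split => //; first by rewrite card_unit.
  + by move=> [] []; apply: connect0.
  + rewrite card_unit; apply/eqP; rewrite cards_eq0; apply/eqP/setP => p.
    by rewrite !inE.
- by move=> v; exists tt; rewrite inE.
- by move=> u v _; exists tt; rewrite !inE.
- by move=> v [] [] _ _; apply: connect0.
Qed.

Definition alpha_tw : nat :=
  ex_minn (ex_intro (fun k => `[< alpha_width_at_most k >]) #|V|
                    (asboolT alpha_width_trivial)).

End GraphParams.

(* The graphs Q_k(...) with k = n layers X^1..X^k of size n.           *)
(* 0-indexed: inl (inl (j, i)) = x^{j+1}_{i+1},                        *)
(*            inl (inr j)      = y^{j+1},                              *)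
(*            inr j            = z^{j+1}  (only j+1 < k).              *)
Inductive Qkind := MKI | MKK | AKK | HKK.

Definition QV (k n : nat) : finType := (('I_k * 'I_n) + 'I_k + 'I_k)%type.

(* is layer X^{j+1} turned into a clique with y^{j+1}? *)
Definition clique_layer (c : Qkind) (j : nat) : bool :=
  match c with MKI => ~~ odd j | _ => true end.

(* edges between x^{j+1}_{i+1} and x^{j+2}_{i'+1} *)
Definition inter (c : Qkind) (i i' : nat) : bool :=
  match c with
  | MKI | MKK => i == i'
  | AKK => i != i'
  | HKK => i <= i'
  end.

Definition has_z (c : Qkind) : bool := match c with AKK => true | _ => false end.

Definition Qvert (c : Qkind) (k n : nat) (v : QV k n) : bool :=
  match v with
  | inl (inl _) => true
  | inl (inr j) => clique_layer c j
  | inr j => has_z c && (j.+1 < k)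
  end.

Definition Qedge0 (c : Qkind) (k n : nat) (u v : QV k n) : bool :=
  match u, v with
  | inl (inl (j, i)), inl (inl (j', i')) =>
      ((j.+1 == j') && inter c i i')
      || [&& (j == j' :> nat), (i != i') & clique_layer c j]
  | inl (inl (j, _)), inl (inr j') => (j == j') && clique_layer c j
  | inl (inl (j, _)), inr j' =>
      [&& has_z c, (j'.+1 < k) & ((j == j' :> nat) || (j == j'.+1 :> nat))]
  | _, _ => false
  end.

Definition Qedge (c : Qkind) (k n : nat) (u v : QV k n) : bool :=
  Qedge0 c u v || Qedge0 c v u.

Definition Qgraph (c : Qkind) (k n : nat) : finType :=
  {v : QV k n | Qvert c v}.

Definition Qrel (c : Qkind) (k n : nat) : rel (Qgraph c k n) :=
  fun u v => Qedge c (val u) (val v).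

(* Main.v *)
Require Import Defs.
From mathcomp Require Import all_boot.
From mathcomp Require Import boolp.
From mathcomp Require Import zify.
Set Implicit Arguments.
Unset Strict Implicit.

Section Col.
Variables (V : finType) (E : rel V).
Lemma alpha_col (S : {set V}) m (f : V -> nat) :
  (forall v, v \in S -> f v <= m) ->
  (forall u v, u \in S -> v \in S -> u != v -> f u = f v -> E u v) ->
  alpha E S <= m.+1.
Proof.
move=> hf hE; apply/bigmax_leqP => A /andP[sAS indA].
pose g v : 'I_m.+1 := inord (f v).
have inj : {in A &, injective g}.
  move=> u v uA vA; rewrite /g => /(congr1 (@nat_of_ord _)).
  rewrite !inordK ?ltnS ?hf ?(subsetP sAS) // => efv.
  apply/eqP/negPn/negP => neq.
  have := hE u v (subsetP sAS u uA) (subsetP sAS v vA) neq efv.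
  by move/forallP: indA => /(_ u) /implyP /(_ uA) /forallP /(_ v) /implyP /(_ vA) /negP.
rewrite -(card_in_imset inj); apply: leq_trans (max_card _) _.
by rewrite card_ord.
Qed.
End Col.

Section Tree.
Variables (I : finType) (par : I -> option I) (rk : I -> nat) (r : I).
Hypotheses (Hr : par r = None) (Hnr : forall a, a != r -> par a != None)
  (Hrk : forall a b, par a = Some b -> rk b < rk a).

Definition tpar : rel I := fun a b => (par a == Some b) || (par b == Some a).

Lemma tpar_sym : symmetric tpar.
Proof. by move=> a b; rewrite /tpar orbC. Qed.

Lemma tpar_tree : is_tree tpar.
Proof.
split.
- move=> a; rewrite /tpar orbb; apply/negP => /eqP /Hrk; by rewrite ltnn.
- exact: tpar_sym.
- by apply/card_gt0P; exists r.
- have toR : forall a, connect tpar a r.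
    move=> a; move: {2}(rk a) (leqnn (rk a)) => k; elim: k a => [|k IH] a.
      case: (eqVneq a r) => [-> _|/Hnr]; first exact: connect0.
      case e: (par a) => [b|] // _ h0; have := Hrk e; lia.
    case: (eqVneq a r) => [-> _|/Hnr]; first exact: connect0.
    case e: (par a) => [b|] // _ hk.
    apply: connect_trans (connect1 _) (IH b _); first by rewrite /tpar e eqxx.
    by rewrite -ltnS; apply: leq_trans (Hrk e) hk.
  move=> s t; apply: connect_trans (toR s) _.
  by rewrite (sym_connect_sym tpar_sym) toR.
- pose P1 := [set p : I * I | par p.1 == Some p.2].
  pose sw := fun p : I * I => (p.2, p.1).
  have swK : involutive sw by case.
  have e1 : [set p : I * I | tpar p.1 p.2] = P1 :|: sw @: P1.
    apply/setP => [[a b]]; rewrite !inE /tpar /=; congr (_ || _).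
    apply/eqP/imsetP => [h|[[x y]]]; last by rewrite inE /= => /eqP h [-> ->].
    by exists (b, a); rewrite ?inE /= ?h.
  have d : P1 :&: sw @: P1 = set0.
    apply/setP => [[a b]]; rewrite !inE /=.
    apply/negP => /andP[/eqP h1 /imsetP[[x y]]]; rewrite inE /= => /eqP h2 [ex ey].
    subst; move: h1 h2 => /= h1 h2; have := Hrk h1; have := Hrk h2; lia.
  rewrite e1 cardsU d cards0 subn0 card_imset; last exact: (inv_inj swK).
  suff -> : #|P1| = #|I| - 1 by rewrite mul2n addnn.
  pose g := fun a => (a, odflt a (par a)).
  have -> : P1 = g @: [set~ r].
    apply/setP => [[a b]]; rewrite inE /=; apply/eqP/imsetP => [h|[x]].
      exists a; last by rewrite /g h.
      by rewrite !inE; apply/eqP => ear; move: h; rewrite ear Hr.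
    rewrite !inE /g => /Hnr; case e: (par x) => [y|] // _ [-> ->]; by rewrite e.
  rewrite card_imset ?cardsC1 ?subn1 //.
  by move=> x y [].
Qed.

Section TD.
Variables (V : finType) (E : rel V) (B : I -> {set V}) (h : V -> I).
Hypotheses (Hh : forall v, v \in B (h v))
  (HE : forall u v, E u v -> exists t, (u \in B t) && (v \in B t))
  (Hp : forall v t, v \in B t -> t != h v -> exists2 p, par t = Some p & v \in B p).

Lemma tpar_td : is_tree_decomposition E tpar B.
Proof.
split; [exact: tpar_tree | by move=> v; exists (h v) | exact: HE |].
move=> v.
set e := [rel a b | _].
have esym : symmetric e.
  by move=> a b; rewrite /e /= tpar_sym; case: (tpar _ _); rewrite //= andbC.
have toH : forall t, v \in B t -> connect e t (h v).
  move=> t; move: {2}(rk t) (leqnn (rk t)) => k; elim: k t => [|k IH] t.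
    move=> h0 vt; case: (eqVneq t (h v)) => [->|/(Hp vt)[p ep vp]]; first exact: connect0.
    have := Hrk ep; lia.
  move=> hk vt; case: (eqVneq t (h v)) => [->|/(Hp vt)[p ep vp]]; first exact: connect0.
  apply: connect_trans (connect1 _) (IH p _ vp); first by rewrite /e /= /tpar ep eqxx vt vp.
  by rewrite -ltnS; apply: leq_trans (Hrk ep) hk.
move=> s t vs vt; apply: connect_trans (toH s vs) _.
by rewrite (sym_connect_sym esym) toH.
Qed.
End TD.

End Tree.


Lemma oddE (x : nat) : odd x = (x %% 2 == 1).
Proof. by rewrite modn2; case: odd. Qed.
Lemma eq_ordE m (x y : 'I_m) : (x == y) = (x == y :> nat).
Proof. by []. Qed.
Lemma inlE (A B : eqType) (x y : A) : (@inl A B x == inl y) = (x == y). Proof. by []. Qed.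
Lemma inrE (A B : eqType) (x y : B) : (@inr A B x == inr y) = (x == y). Proof. by []. Qed.
Lemma inlrE (A B : eqType) (x : A) (y : B) : (inl x == inr y) = false. Proof. by []. Qed.
Lemma inrlE (A B : eqType) (x : A) (y : B) : (inr y == inl x) = false. Proof. by []. Qed.


Definition II (n : nat) := ('I_n + 'I_n * 'I_n)%type.
Definition ord_sub n (j : 'I_n) (d : nat) : 'I_n :=
  Ordinal (leq_ltn_trans (leq_subr d j) (ltn_ord j)).
Lemma ord_subE n (j : 'I_n) d : val (ord_sub j d) = j - d. Proof. by []. Qed.

Ltac norm := rewrite /= ?inlE ?inrE ?inlrE ?inrlE ?xpair_eqE ?eq_ordE ?ord_subE ?oddE /=.

Definition qpar n (t : II n) : option (II n) :=
  match t with
  | inl a => if val a == 0 then None else Some (inl (ord_sub a 1))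
  | inr (a, _) => Some (inl a)
  end.
Definition qrk n (t : II n) : nat :=
  match t with inl a => val a | inr (a, _) => (val a).+1 end.

Definition inB n c (t : II n) (v : QV n n) : bool :=
  match t, v with
  | inl a, inl (inl (j, i)) =>
      if c is MKI then (j %% 2 == 0) && ((j == a %/ 2 * 2 :> nat) || (j == a %/ 2 * 2 + 2 :> nat))
      else (j == a :> nat) || (j == a.+1 :> nat)
  | inl a, inl (inr j) => j == a :> nat
  | inl a, inr j => j == a :> nat
  | inr (a, i), inl (inl (j, i')) =>
      if c is MKI then [&& a %% 2 == 1, i' == i :> nat & (j.+1 == a) || (j == a :> nat) || (j == a.+1 :> nat)]
      else false
  | _, _ => false
  end.

Definition qh n c (v : QV n n) : II n :=
  match v with
  | inl (inl (j, i)) => if c is MKI then (if odd j then inr (j, i) else inl (ord_sub j 2))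
                        else inl (ord_sub j 1)
  | inl (inr j) => inl j
  | inr j => inl j
  end.

Lemma Hp_conc n c (v : QV n n) (t : II n) : Qvert c v -> inB c t v -> t != qh c v ->
  match qpar t with Some p => inB c p v | None => false end.
Proof.
case: c; case: t => [a|[a i]]; case: v => [[[j i']|j]|j] /=.
all: repeat case: ifP.
all: norm.
all: move=> *; lia.
Qed.

Lemma Hh_conc n c (v : QV n n) : Qvert c v -> inB c (qh c v) v.
Proof.
case: c; case: v => [[[j i']|j]|j] /=.
all: repeat case: ifP.
all: norm.
all: move=> *; lia.
Qed.

Definition wt n c (u v : QV n n) : II n :=
  match u, v with
  | inl (inl (j, i)), inl (inl (j', i')) =>
      if c is MKI then (if j == j' :> nat then inl j else if odd j then inr (j, i) else inr (j', i'))
      else inl (if j <= j' then j else j')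
  | inl (inl _), inl (inr j') => inl j'
  | inl (inl _), inr j' => inl j'
  | inl (inr j), _ => inl j
  | inr j, _ => inl j
  end.

Lemma HE_conc n c (u v : QV n n) : Qvert c u -> Qvert c v -> Qedge c u v ->
  inB c (wt c u v) u && inB c (wt c u v) v.
Proof.
rewrite /Qedge.
case: c; case: u => [[[j i]|j]|j]; case: v => [[[j' i']|j']|j'] /=.
all: repeat case: ifP.
all: norm.
all: move=> *; lia.
Qed.

Definition colb n c (t : II n) (v : QV n n) : nat :=
  match t, v with
  | inl a, inl (inl (j, _)) =>
      if c is MKI then (if j == a %/ 2 * 2 :> nat then 0 else 1) else (if j == a :> nat then 0 else 1)
  | inl _, inl (inr _) => 0
  | inl _, inr _ => 1
  | inr (a, _), inl (inl (j, _)) => if j == a.+1 :> nat then 1 else 0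
  | _, _ => 0
  end.

Lemma colb_le n c t (v : QV n n) : colb c t v <= 1.
Proof. case: c; case: t => [a|[a i]]; case: v => [[[j i']|j]|j] /=; by repeat case: ifP. Qed.

Lemma colb_conc n c t (u v : QV n n) : Qvert c u -> Qvert c v -> inB c t u -> inB c t v ->
  u != v -> colb c t u = colb c t v -> Qedge c u v.
Proof.
rewrite /Qedge.
case: c; case: t => [a|[a i0]]; case: u => [[[j i]|j]|j]; case: v => [[[j' i']|j']|j'] /=.
all: repeat case: ifP.
all: norm.
all: move=> *; lia.
Qed.

Definition layer n (w : QV n n) : nat :=
  match w with inl (inl (j, _)) => j | inl (inr j) => j | inr j => j end.

Definition cs n (w v : QV n n) : nat :=
  match v with
  | inl (inl (j, _)) => if j.+1 == layer w then 0 else if j == layer w :> nat then 1 else 2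
  | inl (inr _) => 1
  | inr j => if j.+1 == layer w then 0 else 2
  end.

Lemma cs_le n (w v : QV n n) : cs w v <= 2.
Proof. case: v => [[[j i']|j]|j] /=; by repeat case: ifP. Qed.

Ltac bsplit := repeat match goal with
 | H : is_true (_ && _) |- _ => case/andP: H => ? ?
 | H : is_true (_ || _) |- _ => case/orP: H => ?
 | H : is_true (?x == ?y) |- _ => move/eqP: H => H; try subst x; try subst y
 | H : (_ = false) |- _ => move/negbT: H => H
 | H : is_true true |- _ => clear H
 end.
Ltac crush := norm; move=> *; bsplit; try done; lia.

Lemma cs_conc n c (w u v : QV n n) : Qvert c w -> Qvert c u -> Qvert c v ->
  (u == w) || Qedge c w u -> (v == w) || Qedge c w v ->
  u != v -> cs w u = cs w v -> Qedge c u v.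
Proof.
rewrite /Qedge.
case: c; case: w => [[[[a ha] [b hb]]|[a ha]]|[a ha]]; case: u => [[[[j hj] [i hi]]|[j hj]]|[j hj]]; case: v => [[[[j' hj'] [i' hi']]|[j' hj']]|[j' hj']] /=.
all: repeat case: ifP.
all: crush.
Qed.



Lemma alpha_tw_le (V : finType) (E : rel V) k : alpha_width_at_most E k -> alpha_tw E <= k.
Proof.
move=> h; rewrite /alpha_tw; case: ex_minnP => m _ hmin; apply: hmin.
exact/asboolP.
Qed.

Unset Implicit Arguments.
Set Strict Implicit.
Theorem lemma8p5 (n : nat) : 3 <= n ->
  forall c : Qkind,
    alpha_tw (@Qrel c n n) <= 2 /\ alpha_star (@Qrel c n n) <= 3.
Proof.
move=> n3 c; split.
- apply: alpha_tw_le.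
  have n0 : 0 < n by lia.
  pose r : II n := inl (Ordinal n0).
  pose B := fun t : II n => [set v : Qgraph c n n | inB c t (val v)].
  exists (II n), (tpar (@qpar n)), B; split.
    apply: (@tpar_td _ (@qpar n) (@qrk n) r) => //.
    + move=> [a|[a i]] //=; case: ifP => // ha; rewrite /r inlE eq_ordE /=; lia.
    + move=> [a|[a i]] b //=; last by case=> <- /=.
      by case: ifP => // ha [<-] /=; lia.
    + by move=> v; rewrite inE; apply: Hh_conc; exact: (valP v).
    + move=> u v e; exists (wt c (val u) (val v)); rewrite !inE.
      by apply: HE_conc => //; [exact: (valP u) | exact: (valP v)].
    + move=> v t; rewrite !inE => vt ht.
      have := Hp_conc (valP v) vt ht.
      case: (qpar t) => [p|] // vp; exists p => //; by rewrite inE.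
  move=> t; apply: (@alpha_col _ _ _ 1 (fun v => colb c t (val v))).
    by move=> v _; apply: colb_le.
  move=> u v; rewrite !inE => ut vt uv; apply: colb_conc => //; [exact: (valP u) | exact: (valP v)].
- apply/bigmax_leqP => w _.
  apply: (@alpha_col _ _ _ 2 (fun v => cs (val w) (val v))).
    by move=> v _; apply: cs_le.
  move=> u v; rewrite /closed_nbhd !inE => hu hv uv.
  apply: (@cs_conc n c (val w)); [exact: valP|exact: valP|exact: valP|exact hu|exact hv|exact uv].
Qed.
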